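(* Let $\Phi:\mathbf D\to\mathbf C$, $\Psi:\mathbf C\to\mathbf D$ (with homotopy $h$) be a deformation retract of finite-type chain complexes of real inner product spaces, and let $\mathcal M$ be its Morsification, with base $I^{\mathcal M}$ of $\mathbf C$ and set of critical cells $\mathcal M^0$. Then $$\mathrm{id}_{\mathbf C}-\Phi\Psi=\sum_{\alpha\in I^{\mathcal M}\setminus\mathcal M^0} i_\alpha\circ\pi_\alpha,$$ where $i_\alpha:C_\alpha\to\mathbf C$ is the inclusion of the summand and $\pi_\alpha:\mathbf C\to C_\alpha$ the projection along the other summands of the decomposition $\mathbf C_n=\bigoplus_{\alpha\in I^{\mathcal M}_n}C_\alpha$.
   Context: Deformation retract: chain maps with $\Psi\Phi=\mathrm{id}_{\mathbf D}$ and $\partial h+h\partial=\mathrm{id}_{\mathbf C}-\Phi\Psi$. One has $\mathbf C=\operatorname{Ker}\Psi\oplus\operatorname{Im}\Phi$ as chain complexes. The Morsification $\mathcal M$: give the subcomplex $\operatorname{Ker}\Psi$ (boundary $\partial'$) the restricted inner product and choose a Hodge basis of it, i.e. in each degree, via singular value decompositions, orthonormal bases $\mathcal R_+(\partial'_m)$ of $\operatorname{Im}\partial_m'^\dagger$ and $\mathcal L_+(\partial'_m)$ of $\operatorname{Im}\partial'_m$ with a bijection $v\mapsto w$, $\partial'_mv=\sigma w$, $\sigma>0$, together with a basis of $\operatorname{Ker}(\partial_m'^\dagger\partial'_m+\partial'_{m+1}\partial_{m+1}'^\dagger)$. The base $I^{\mathcal M}$ of $\mathbf C$ consists of the one-dimensional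 summands spanned by these vectors together with a decomposition of each $(\operatorname{Im}\Phi)_n$ into summands; the matching $\mathcal M$ consists of the edges $v\to w$ above, and the critical cells $\mathcal M^0$ are the unmatched ones. *)

(* Defs.v *)
(* Chain complexes of finite-dimensional real inner product
   spaces, in coordinates: C_n = 'rV[R]_(c n) with inner product given by a
   positive definite symmetric Gram matrix; linear maps act on row vectors
   (x |-> x *m A), so the composite "g after f" is the matrix  F *m G. *)
From HB Require Import structures.
From mathcomp Require Import all_boot all_order all_algebra.
From mathcomp Require Import reals.
Set Implicit Arguments. Unset Strict Implicit. Unset Printing Implicit Defensive.
Import Order.TTheory GRing.Theory Num.Theory.
Local Open Scope ring_scope.

Record defRetract (R : realType) := DefRetract {
  cdim : nat -> nat;
  ddim : nat -> nat;
  gram : forall n, 'M[R]_(cdim n);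
  gram_sym : forall n, (gram n)^T = gram n;
  gram_pos : forall n (x : 'rV[R]_(cdim n)), x != 0 -> 0 < (x *m gram n *m x^T) 0 0;
  dgram : forall n, 'M[R]_(ddim n);
  dgram_sym : forall n, (dgram n)^T = dgram n;
  dgram_pos : forall n (x : 'rV[R]_(ddim n)), x != 0 -> 0 < (x *m dgram n *m x^T) 0 0;
  finite_type : exists N, forall n, (N <= n)%N -> cdim n = 0%N /\ ddim n = 0%N;
  dC : forall n, 'M[R]_(cdim n.+1, cdim n);
  dD : forall n, 'M[R]_(ddim n.+1, ddim n);
  dC2 : forall n, dC n.+1 *m dC n = 0;
  dD2 : forall n, dD n.+1 *m dD n = 0;
  Phi : forall n, 'M[R]_(ddim n, cdim n);
  Psi : forall n, 'M[R]_(cdim n, ddim n);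
  Phi_chain : forall n, dD n *m Phi n = Phi n.+1 *m dC n;
  Psi_chain : forall n, dC n *m Psi n = Psi n.+1 *m dD n;
  PsiPhi : forall n, Phi n *m Psi n = 1%:M;
  hom : forall n, 'M[R]_(cdim n, cdim n.+1);
  hom_eq : forall n,
    hom n *m dC n +
      (match n as k return 'M[R]_(cdim k, cdim k) with
       | 0 => 0
       | m.+1 => dC m *m hom m
       end) = 1%:M - Psi n *m Phi n
}.

Section Morse.
Variables (R : realType) (X : defRetract R).
Local Notation c := (cdim X).
Local Notation d := (dC X).

Definition ipC n (x y : 'rV[R]_(c n)) : R := (x *m gram X n *m y^T) 0 0.

Definition inKer n (x : 'rV[R]_(c n)) : Prop := x *m Psi X n = 0.

Definition imB n (x : 'rV[R]_(c n)) : Prop :=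
  exists z : 'rV[R]_(c n.+1), inKer z /\ z *m d n = x.

(* x = d'^dagger_{n+1} y, the adjoint of d'_{n+1} : Ker Psi_{n+1} -> Ker Psi_n
   w.r.t. the restricted inner products (y in Ker Psi_n, x in Ker Psi_{n+1}) *)
Definition adjB n (y : 'rV[R]_(c n)) (x : 'rV[R]_(c n.+1)) : Prop :=
  inKer x /\ forall z : 'rV[R]_(c n.+1), inKer z -> ipC (z *m d n) y = ipC z x.

Definition imBadj n (x : 'rV[R]_(c n.+1)) : Prop :=
  exists y : 'rV[R]_(c n), inKer y /\ adjB y x.

(* u = d'^dagger_n d'_n x   (with d'_0 = 0) *)
Definition downLap (n : nat) : 'rV[R]_(c n) -> 'rV[R]_(c n) -> Prop :=
  match n as k return 'rV[R]_(c k) -> 'rV[R]_(c k) -> Prop with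
  | 0 => fun _ u => u = 0
  | m.+1 => fun x u => adjB (x *m d m) u
  end.

(* x in Ker (d'^dagger_n d'_n + d'_{n+1} d'^dagger_{n+1}) (inside Ker Psi_n) *)
Definition harmonic n (x : 'rV[R]_(c n)) : Prop :=
  inKer x /\ exists (u : 'rV[R]_(c n)) (t : 'rV[R]_(c n.+1)),
    downLap u x /\ adjB x t /\ u + t *m d n = 0.

End Morse.

(* For the boundary d'_{n+1} (C_{n+1} -> C_n): the rows of mV n form the
   orthonormal basis R_+(d'_{n+1}) of Im d'^dagger_{n+1}, the rows of mW n the
   orthonormal basis L_+(d'_{n+1}) of Im d'_{n+1}, and the common index
   i : 'I_(mr n) is the bijection v |-> w, with d' v_i = sigma_i w_i. *)
Record morsification (R : realType) (X : defRetract R) := Morsification {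
  mr : nat -> nat;
  mV : forall n, 'M[R]_(mr n, cdim X n.+1);
  mW : forall n, 'M[R]_(mr n, cdim X n);
  msigma : forall n, 'I_(mr n) -> R;
  mV_orth : forall n (i j : 'I_(mr n)),
    ipC (row i (mV n)) (row j (mV n)) = (i == j)%:R;
  mW_orth : forall n (i j : 'I_(mr n)),
    ipC (row i (mW n)) (row j (mW n)) = (i == j)%:R;
  mV_span : forall n (x : 'rV[R]_(cdim X n.+1)), (x <= mV n)%MS <-> imBadj x;
  mW_span : forall n (x : 'rV[R]_(cdim X n)), (x <= mW n)%MS <-> imB x;
  msigma_pos : forall n (i : 'I_(mr n)), 0 < msigma i;
  mVW : forall n (i : 'I_(mr n)), row i (mV n) *m dC X n = msigma i *: row i (mW n);
  mk : nat -> nat;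
  mH : forall n, 'M[R]_(mk n, cdim X n);
  mH_free : forall n, row_free (mH n);
  mH_span : forall n (x : 'rV[R]_(cdim X n)), (x <= mH n)%MS <-> harmonic x;
  (* decomposition of (Im Phi)_n into summands (row spaces of square matrices) *)
  mp : nat -> nat;
  mP : forall n, 'I_(mp n) -> 'M[R]_(cdim X n);
  mP_direct : forall n, mxdirect (\sum_(j < mp n) mP j)%MS;
  mP_sum : forall n, (\sum_(j < mp n) mP j == Phi X n)%MS
}.

Section Base.
Variables (R : realType) (X : defRetract R) (M : morsification X).
Local Notation c := (cdim X).

(* the v-vectors living in degree n: R_+(d'_n)  (none in degree 0) *)
Definition rv (n : nat) : nat :=
  match n with 0 => 0%N | m.+1 => mr M m end.
Definition Vdeg (n : nat) : 'M[R]_(rv n, c n) :=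
  match n as k return 'M[R]_(rv k, c k) with
  | 0 => 0
  | m.+1 => mV M m
  end.

(* the index set I^M_n of the base of C_n:
   R_+(d'_n) + L_+(d'_{n+1}) + harmonic basis + summands of (Im Phi)_n *)
Definition baseIdx (n : nat) : Type :=
  ('I_(rv n) + 'I_(mr M n) + 'I_(mk M n) + 'I_(mp M n))%type.

Definition summand n (a : baseIdx n) : 'M[R]_(c n) :=
  match a with
  | inl (inl (inl i)) => <<row i (Vdeg n)>>%MS
  | inl (inl (inr i)) => <<row i (mW M n)>>%MS
  | inl (inr i) => <<row i (mH M n)>>%MS
  | inr j => mP j
  end.

(* critical cells M^0: the unmatched summands (harmonic vectors and the
   summands of Im Phi); the matched ones are the v's and w's *)
Definition critical n (a : baseIdx n) : bool :=
  match a with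
  | inl (inl _) => false
  | _ => true
  end.

Definition incproj n (a : baseIdx n) : 'M[R]_(c n) :=
  proj_mx (summand a) (\sum_(b : baseIdx n | b != a) summand b)%MS.

End Base.

(* Main.v *)
Require Import Defs.
From mathcomp Require Import all_boot all_order all_algebra.
From mathcomp Require Import reals.
Import Order.TTheory GRing.Theory Num.Theory.
Local Open Scope ring_scope.
Set Implicit Arguments. Unset Strict Implicit. Unset Printing Implicit Defensive.

Lemma ipC_mx (R : realType) (X : defRetract R) n p q (A : 'M[R]_(p, cdim X n)) (C : 'M[R]_(q, cdim X n)) i j :
  (A *m gram X n *m C^T) i j = ipC (row i A) (row j C).
Proof.
have -> : (A *m gram X n *m C^T) i j = (row i (A *m gram X n *m C^T)) 0 j by rewrite !mxE.
rewrite /ipC !row_mul !mxE.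
by apply: eq_bigr => k _; rewrite !mxE.
Qed.

Lemma ipC_sym (R : realType) (X : defRetract R) n (x y : 'rV[R]_(cdim X n)) :
  ipC x y = ipC y x.
Proof.
rewrite /ipC; have -> : (x *m gram X n *m y^T) 0 0 = (x *m gram X n *m y^T)^T 0 0 by rewrite [RHS]mxE.
by rewrite !trmx_mul trmxK gram_sym mulmxA.
Qed.

Lemma ipC_pos (R : realType) (X : defRetract R) n (x : 'rV[R]_(cdim X n)) :
  ipC x x = 0 -> x = 0.
Proof.
move=> h; apply/eqP; apply: contraTT isT => /(@gram_pos _ X) hp.
by move: hp; rewrite -/(ipC x x) h ltxx.
Qed.

Lemma row0_rV (R : realType) k (y : 'rV[R]_k) : row 0 y = y.
Proof. by apply/matrixP => i j; rewrite mxE (ord1 i). Qed.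

Lemma ipC_mulmxl (R : realType) (X : defRetract R) n p (c : 'rV[R]_p) (A : 'M[R]_(p, cdim X n)) y :
  ipC (c *m A) y = \sum_j c 0 j * ipC (row j A) y.
Proof.
rewrite /ipC -!mulmxA mxE; apply: eq_bigr => j _; congr (_ * _).
by rewrite !mulmxA ipC_mx row0_rV.
Qed.

Lemma ipCZ (R : realType) (X : defRetract R) n a (x y : 'rV[R]_(cdim X n)) :
  ipC (a *: x) y = a * ipC x y.
Proof. by rewrite /ipC -!scalemxAl mxE. Qed.

Lemma ipC0l (R : realType) (X : defRetract R) n (y : 'rV[R]_(cdim X n)) : ipC 0 y = 0.
Proof. by rewrite /ipC !mul0mx mxE. Qed.

Lemma ipC0r (R : realType) (X : defRetract R) n (y : 'rV[R]_(cdim X n)) : ipC y 0 = 0.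
Proof. by rewrite /ipC trmx0 mulmx0 mxE. Qed.

Lemma mx_ipC (R : realType) (X : defRetract R) n (x y : 'rV[R]_(cdim X n)) :
  x *m gram X n *m y^T = (ipC x y)%:M.
Proof. exact: mx11_scalar. Qed.

Lemma inKer_d (R : realType) (X : defRetract R) n (x : 'rV[R]_(cdim X n.+1)) :
  inKer x -> inKer (x *m dC X n).
Proof. by rewrite /inKer -mulmxA Psi_chain mulmxA => ->; rewrite mul0mx. Qed.

Lemma QdC (R : realType) (X : defRetract R) n :
  Psi X n.+1 *m Phi X n.+1 *m dC X n = dC X n *m (Psi X n *m Phi X n).
Proof. by rewrite -mulmxA -Phi_chain !mulmxA Psi_chain. Qed.

Lemma inKer_1Q (R : realType) (X : defRetract R) n (x : 'rV[R]_(cdim X n)) :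
  inKer (x *m (1%:M - Psi X n *m Phi X n)).
Proof.
by rewrite /inKer mulmxBr mulmx1 mulmxBl -!mulmxA PsiPhi mulmx1 subrr.
Qed.

Lemma inKerQ (R : realType) (X : defRetract R) n (x : 'rV[R]_(cdim X n)) :
  inKer x -> x *m (Psi X n *m Phi X n) = 0.
Proof. by rewrite /inKer mulmxA => ->; rewrite mul0mx. Qed.

Lemma PhiQ (R : realType) (X : defRetract R) n (y : 'rV[R]_(cdim X n)) :
  (y <= Phi X n)%MS -> y *m (Psi X n *m Phi X n) = y.
Proof. by case/submxP => u ->; rewrite -mulmxA (mulmxA (Phi X n)) PsiPhi mul1mx. Qed.

Lemma harmonic0 (R : realType) (X : defRetract R) n (y : 'rV[R]_(cdim X n)) :
  harmonic y -> y = 0.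
Proof.
case: n y => [|m] y [Ky [u [t [hd [ht hu]]]]]; first exact: hd.
move: hd => [_ hz]; have := hz y Ky.
have -> : u = - (t *m dC X m.+1) by apply/eqP; rewrite -addr_eq0 hu.
rewrite mulNmx -mulmxA dC2 mulmx0 oppr0 ipC0r => /esym; exact: ipC_pos.
Qed.

Lemma mxker0 (R : realType) (X : defRetract R) n p (A : 'M[R]_(p, cdim X n)) :
  (forall i, inKer (row i A)) -> A *m Psi X n = 0.
Proof. by move=> h; apply/row_matrixP => i; rewrite row_mul row0 h. Qed.

Lemma W_imB (R : realType) (X : defRetract R) (M : morsification X) n i :
  imB (row i (mW M n)).
Proof. by apply/mW_span; exact: row_sub. Qed.

Lemma imB_ker (R : realType) (X : defRetract R) n (x : 'rV[R]_(cdim X n)) :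
  imB x -> inKer x.
Proof. by case=> z [Kz <-]; exact: inKer_d. Qed.

Lemma W_ker (R : realType) (X : defRetract R) (M : morsification X) n :
  mW M n *m Psi X n = 0.
Proof. by apply: mxker0 => i; apply: imB_ker; exact: W_imB. Qed.

Lemma V_adj (R : realType) (X : defRetract R) (M : morsification X) m i :
  exists y, inKer y /\ adjB y (row i (mV M m)).
Proof. by apply/mV_span; exact: row_sub. Qed.

Lemma V_ker (R : realType) (X : defRetract R) (M : morsification X) n :
  Vdeg M n *m Psi X n = 0.
Proof.
case: n => [|m] /=; first by rewrite flatmx0.
by apply: mxker0 => i; have [y [_ []]] := V_adj i.
Qed.

Lemma VV (R : realType) (X : defRetract R) (M : morsification X) n :
  Vdeg M n *m gram X n *m (Vdeg M n)^T = 1%:M.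
Proof.
case: n => [|m] /=; first by rewrite flatmx0 [RHS]flatmx0.
by apply/matrixP => i j; rewrite ipC_mx mV_orth !mxE.
Qed.

Lemma WW (R : realType) (X : defRetract R) (M : morsification X) n :
  mW M n *m gram X n *m (mW M n)^T = 1%:M.
Proof. by apply/matrixP => i j; rewrite ipC_mx mW_orth !mxE. Qed.

Lemma WV (R : realType) (X : defRetract R) (M : morsification X) n :
  mW M n *m gram X n *m (Vdeg M n)^T = 0.
Proof.
case: n => [|m] /=; first by rewrite thinmx0.
apply/matrixP => i j; rewrite ipC_mx mxE.
have [y [Ky [Kv hv]]] := V_adj j.
have [z [Kz hz]] := W_imB i.
rewrite -hv; last exact: imB_ker (W_imB i).
by rewrite -hz -mulmxA dC2 mulmx0 ipC0l.
Qed.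

Lemma VW (R : realType) (X : defRetract R) (M : morsification X) n :
  Vdeg M n *m gram X n *m (mW M n)^T = 0.
Proof.
have := WV M n; move/(congr1 trmx); rewrite !trmx_mul trmxK gram_sym trmx0 mulmxA.
done.
Qed.

Lemma dz (R : realType) (X : defRetract R) (M : morsification X) m (p : 'rV[R]_(cdim X m.+1)) :
  inKer p -> p *m gram X m.+1 *m (mV M m)^T = 0 -> p *m dC X m = 0.
Proof.
move=> Kp hV.
have /submxP [c qE] : (p *m dC X m <= mW M m)%MS by apply/mW_span; exists p.
suff c0 : c = 0 by rewrite qE c0 mul0mx.
apply/rowP => i; rewrite [RHS]mxE.
have [y [Ky [Kv hv]]] := V_adj i.
have e1 : ipC (p *m dC X m) y = 0.
  rewrite hv //; have := ipC_mx p (mV M m) 0 i.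
  by rewrite row0_rV hV mxE => <-.
have wy : forall j, ipC (row j (mW M m)) y = (j == i)%:R / msigma j.
  move=> j; have sj := msigma_pos j.
  rewrite -[ipC _ _](mulKf (lt0r_neq0 sj)) -ipCZ -mVW hv; last first.
    by have [y' [_ []]] := V_adj j.
  by rewrite mV_orth mulrC.
move: e1; rewrite qE ipC_mulmxl (bigD1 i) //= big1 ?addr0; last first.
  by move=> j /negPf ji; rewrite wy ji mul0r mulr0.
rewrite wy eqxx mul1r => /eqP; rewrite mulf_eq0 invr_eq0 (negbTE (lt0r_neq0 (msigma_pos i))) orbF.
by move/eqP.
Qed.

Lemma hodge_core (R : realType) (X : defRetract R) (M : morsification X) n (p : 'rV[R]_(cdim X n)) :
  inKer p -> p *m Defs.hom X n *m dC X n = p -> p *m gram X n *m (mW M n)^T = 0 -> p = 0.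
Proof.
move=> Kp hd hW.
have Bp : imB p.
  exists (p *m Defs.hom X n *m (1%:M - Psi X n.+1 *m Phi X n.+1)); split; first exact: inKer_1Q.
  by rewrite -mulmxA mulmxBl mul1mx QdC mulmxBr !mulmxA hd -mulmxA (inKerQ Kp) subr0.
have /submxP [u pu] : (p <= mW M n)%MS by apply/mW_span.
apply: ipC_pos; by rewrite /ipC {2}pu trmx_mul mulmxA hW mul0mx mxE.
Qed.

Lemma hodge0 (R : realType) (X : defRetract R) (M : morsification X) n (p : 'rV[R]_(cdim X n)) :
  inKer p -> p *m gram X n *m (Vdeg M n)^T = 0 -> p *m gram X n *m (mW M n)^T = 0 -> p = 0.
Proof.
move=> Kp hV hW; apply: (hodge_core Kp) hW.
have := congr1 (mulmx p) (hom_eq X n).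
rewrite mulmxDr mulmxBr mulmx1 (inKerQ Kp) subr0 mulmxA.
case: n p Kp hV => [|m] p Kp hV /=; first by rewrite mulmx0 addr0.
by rewrite mulmxA (dz Kp hV) mul0mx addr0.
Qed.

Lemma kerdec (R : realType) (X : defRetract R) (M : morsification X) n (k : 'rV[R]_(cdim X n)) :
  inKer k -> k = k *m gram X n *m (Vdeg M n)^T *m Vdeg M n + k *m gram X n *m (mW M n)^T *m mW M n.
Proof.
move=> Kk; apply/eqP; rewrite -subr_eq0; apply/eqP.
have VV' : Vdeg M n *m (gram X n *m (Vdeg M n)^T) = 1%:M by rewrite mulmxA VV.
have WW' : mW M n *m (gram X n *m (mW M n)^T) = 1%:M by rewrite mulmxA WW.
have VW' : Vdeg M n *m (gram X n *m (mW M n)^T) = 0 by rewrite mulmxA VW.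
have WV' : mW M n *m (gram X n *m (Vdeg M n)^T) = 0 by rewrite mulmxA WV.
apply: (hodge0 (M := M)).
- rewrite /inKer !mulmxBl !mulmxDl -!mulmxA V_ker W_ker !mulmx0 Kk.
  by rewrite addr0 subrr.
- by rewrite !mulmxBl !mulmxDl -!mulmxA VV' WV' !mulmx0 mulmx1 addr0 subrr.
- by rewrite !mulmxBl !mulmxDl -!mulmxA VW' WW' !mulmx0 mulmx1 add0r subrr.
Qed.

Lemma span (R : realType) (X : defRetract R) (M : morsification X) n (x : 'rV[R]_(cdim X n)) :
  (x <= \sum_(b : baseIdx M n) summand b)%MS.
Proof.
have -> : x = x *m (1%:M - Psi X n *m Phi X n) + x *m (Psi X n *m Phi X n).
  by rewrite mulmxBr mulmx1 subrK.
rewrite addmx_sub //.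
  rewrite (kerdec M (inKer_1Q x)) addmx_sub //.
    apply: submx_trans (submxMl _ _) _; apply/row_subP => i.
    by apply: (sumsmx_sup (inl (inl (inl i)))) => //; rewrite /summand genmxE.
  apply: submx_trans (submxMl _ _) _; apply/row_subP => i.
  by apply: (sumsmx_sup (inl (inl (inr i)))) => //; rewrite /summand genmxE.
rewrite mulmxA; apply: submx_trans (submxMl _ _) _.
have /andP [_ h] := mP_sum M n.
apply: submx_trans h _; apply/sumsmx_subP => j _.
exact: (sumsmx_sup (inr j)).
Qed.

Definition rvec (R : realType) (X : defRetract R) (M : morsification X) n (a : baseIdx M n) : 'rV[R]_(cdim X n) :=
  match a with
  | inl (inl (inl i)) => row i (Vdeg M n)
  | inl (inl (inr i)) => row i (mW M n)
  | _ => 0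
  end.

Lemma comp (R : realType) (X : defRetract R) (M : morsification X) n (b : baseIdx M n) (y : 'rV[R]_(cdim X n)) :
  (y <= summand b)%MS -> y *m (1%:M - Psi X n *m Phi X n) = if critical b then 0 else y.
Proof.
rewrite mulmxBr mulmx1.
case: b => [[[i|i]|i]|j] /= hy.
- rewrite genmxE in hy; have /submxP [u ->] := submx_trans hy (row_sub _ _).
  by rewrite !mulmxA -(mulmxA u) V_ker mulmx0 mul0mx subr0.
- rewrite genmxE in hy; have /submxP [u ->] := submx_trans hy (row_sub _ _).
  by rewrite !mulmxA -(mulmxA u) W_ker mulmx0 mul0mx subr0.
- rewrite genmxE in hy.
  have -> : y = 0 by apply: harmonic0; apply/(mH_span M); exact: submx_trans hy (row_sub _ _).
  by rewrite mul0mx subrr.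
- have /andP [h _] := mP_sum M n.
  rewrite PhiQ ?subrr //; apply: submx_trans hy _; apply: submx_trans h.
  exact: (sumsmx_sup j).
Qed.

Lemma nc_rvec (R : realType) (X : defRetract R) (M : morsification X) n (b : baseIdx M n) (y : 'rV[R]_(cdim X n)) :
  ~~ critical b -> (y <= summand b)%MS -> exists t, y = t *: rvec b.
Proof.
by case: b => [[[i|i]|i]|j] //= _; rewrite genmxE => /sub_rVP.
Qed.

Lemma gramr (R : realType) (X : defRetract R) (M : morsification X) n (a b : baseIdx M n) :
  ~~ critical a -> ~~ critical b ->
  rvec b *m gram X n *m (rvec a)^T = ((a == b)%:R)%:M.
Proof.
rewrite mx_ipC.
case: a => [[[i|i]|i]|j] //= _; case: b => [[[k|k]|k]|l] //= _; rewrite -ipC_mx.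
- by rewrite VV mxE eq_sym.
- by rewrite WV mxE.
- by rewrite VW mxE.
- by rewrite WW mxE eq_sym.
Qed.

Definition Emx (R : realType) (X : defRetract R) (M : morsification X) n (a : baseIdx M n) :=
  (1%:M - Psi X n *m Phi X n) *m gram X n *m (rvec a)^T *m rvec a.

Lemma Eact (R : realType) (X : defRetract R) (M : morsification X) n (a b : baseIdx M n) (y : 'rV[R]_(cdim X n)) :
  ~~ critical a -> (y <= summand b)%MS -> y *m Emx a = if a == b then y else 0.
Proof.
move=> na hy; rewrite /Emx !mulmxA (comp hy).
case cb: (critical b).
  have -> : (a == b) = false by apply/eqP => ab; move: na; rewrite ab cb.
  by rewrite !mul0mx.
have [t ->] := nc_rvec (negbT cb) hy.
rewrite -!scalemxAl gramr // ?cb // mul_scalar_mx.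
case: eqP => [->|_]; first by rewrite scale1r.
by rewrite scale0r scaler0.
Qed.

Lemma cap0 (R : realType) (X : defRetract R) (M : morsification X) n (a : baseIdx M n) :
  ~~ critical a -> (summand a :&: \sum_(b : baseIdx M n | b != a) summand b)%MS = 0.
Proof.
move=> na; apply/eqP/rowV0P => v; rewrite sub_capmx => /andP [va /sub_sumsmxP [u vu]].
have := Eact na va; rewrite eqxx => <-.
rewrite vu mulmx_suml big1 // => b ba.
by rewrite (Eact na (submxMl _ _)) eq_sym (negbTE ba).
Qed.

Lemma projact (R : realType) (X : defRetract R) (M : morsification X) n (a b : baseIdx M n) (y : 'rV[R]_(cdim X n)) :
  ~~ critical a -> (y <= summand b)%MS -> y *m incproj a = if a == b then y else 0.
Proof.
move=> na hy; case: eqP => [ab|ab].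
  by rewrite -ab in hy; exact: proj_mx_id (cap0 na) hy.
apply: proj_mx_0 (cap0 na) _.
by apply: (sumsmx_sup b) hy; apply/eqP => ba; apply: ab.
Qed.

Unset Implicit Arguments.

Theorem mainTheorem7 (R : realType) (X : defRetract R) (M : morsification X)
  (n : nat) :
  \sum_(a : baseIdx M n | ~~ critical a) incproj a = 1%:M - Psi X n *m Phi X n.
Proof.
suff key : forall x : 'rV[R]_(cdim X n),
    x *m (\sum_(a : baseIdx M n | ~~ critical a) incproj a) = x *m (1%:M - Psi X n *m Phi X n).
  by apply/row_matrixP => i; rewrite !rowE key.
move=> x; have /sub_sumsmxP [u ->] := span M x.
rewrite !mulmx_suml; apply: eq_bigr => b _.
have hy : (u b *m summand b <= summand b)%MS by exact: submxMl.
rewrite (comp hy) mulmx_sumr.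
case cb: (critical b).
  apply: big1 => a na; rewrite (projact na hy).
  by case: eqP => // ab; move: na; rewrite ab cb.
rewrite (bigD1 b) ?cb //= (projact (negbT cb) hy) eqxx big1 ?addr0 // => a /andP [na ab].
by rewrite (projact na hy) (negbTE ab).
Qed.
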